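(* Let $K$ be an algebraically closed field and $\Lambda=K\Gamma/I$ a finite-dimensional algebra ($\Gamma$ a finite quiver, $I$ admissible). Suppose that $U,U'$ are non-isomorphic uniserial finite-dimensional left $\Lambda$-modules with $\dim_KU=\dim_KU'$. Then $U$ does not degenerate to $U'$.
   Context: For $d=\dim_KU$, $\operatorname{Mod}^d_\Lambda$ denotes the affine variety of $\Lambda$-module structures on $K^d$, with the action of $\operatorname{GL}_d$ by conjugation whose orbits are the isomorphism classes. $U$ degenerates to $U'$ if a point of $\operatorname{Mod}^d_\Lambda$ corresponding to $U'$ lies in the Zariski closure of the $\operatorname{GL}_d$-orbit of points corresponding to $U$. *)

(* Defs.v *)
From HB Require Import structures.
From mathcomp Require Import all_boot all_algebra.
From mathcomp Require Import mpoly.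

Set Implicit Arguments.
Unset Strict Implicit.
Unset Printing Implicit Defensive.

Import GRing.Theory.
Local Open Scope ring_scope.

(* Quiver Gamma: vertices 'I_n, arrows 'I_m, source s, target t.       *)
(* A path is a pair (i, r) : starting vertex i, followed by the arrows *)
(* r = [:: a1; ...; ak] traversed in this order (a1 first).             *)
(* (i, [::]) is the trivial path e_i.                                  *)

Definition qpath (n m : nat) := ('I_n * seq 'I_m)%type.

Section Quiver.
Variables (n m : nat) (s t : 'I_m -> 'I_n).

Fixpoint valid_from (i : 'I_n) (r : seq 'I_m) : bool :=
  match r with
  | [::] => true
  | a :: r' => (s a == i) && valid_from (t a) r'
  end.

Definition validp (p : qpath n m) : bool := valid_from p.1 p.2.

Fixpoint pend (i : 'I_n) (r : seq 'I_m) : 'I_n :=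
  match r with
  | [::] => i
  | a :: r' => pend (t a) r'
  end.

(* Elements of the path algebra K Gamma are represented by their       *)
(* coefficient functions on paths (finitely supported, zero off the    *)
(* valid paths).                                                       *)
Variable K : fieldType.

Definition pa_elt (f : qpath n m -> K) : Prop :=
  (forall x, ~~ validp x -> f x = 0) /\
  (exists sp : seq (qpath n m), forall x, f x != 0 -> x \in sp).

(* left multiplication p * f by a path p = (j, q) : (i, r') |-> (i, r' ++ q)
   when r' ends at j (composition "first r', then q"). *)
Definition lmul (p : qpath n m) (f : qpath n m -> K) : qpath n m -> K :=
  fun x =>
    let k := (size x.2 - size p.2)%N in
    if [&& (size p.2 <= size x.2)%N, drop k x.2 == p.2 &
           pend x.1 (take k x.2) == p.1]
    then f (x.1, take k x.2) else 0.

(* right multiplication f * p by a path p = (j, q) : (pend j q, r') |-> (j, q ++ r'). *)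
Definition rmul (f : qpath n m -> K) (p : qpath n m) : qpath n m -> K :=
  fun x =>
    if [&& x.1 == p.1, (size p.2 <= size x.2)%N & take (size p.2) x.2 == p.2]
    then f (pend p.1 p.2, drop (size p.2) x.2) else 0.

Definition pa_ideal (I : (qpath n m -> K) -> Prop) : Prop :=
  [/\ forall f, I f -> pa_elt f,
      I (fun _ => 0),
      forall f g, I f -> I g -> I (fun x => f x + g x),
      forall c f, I f -> I (fun x => c * f x) &
      forall p f, validp p -> I f -> I (lmul p f) /\ I (rmul f p)].

Definition pind (p : qpath n m) : qpath n m -> K :=
  fun x => if x == p then 1 else 0.

(* I is admissible : R^L <= I <= R^2 for some L >= 2, R the arrow ideal
   (R^k is spanned by the paths of length >= k). *)
Definition admissible (I : (qpath n m -> K) -> Prop) : Prop :=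
  pa_ideal I /\
  exists L : nat, [/\ (2 <= L)%N,
    (forall p, validp p -> (L <= size p.2)%N -> I (pind p)) &
    (forall f x, I f -> (size x.2 < 2)%N -> f x = 0)].

(* Points of Mod^d_Lambda, Lambda = K Gamma / I: unital algebra maps   *)
(* K Gamma -> M_d(K) killing I, given by the images E i of the e_i and *)
(* A a of the arrows (K^d = column vectors, left action).              *)
Variable d : nat.

Fixpoint eval_from (A : 'I_m -> 'M[K]_d) (M : 'M[K]_d) (r : seq 'I_m) : 'M[K]_d :=
  match r with
  | [::] => M
  | a :: r' => eval_from A (A a *m M) r'
  end.

(* image of the path (i, [:: a1; ...; ak]) : A ak * ... * A a1 * E i *)
Definition evalp (E : 'I_n -> 'M[K]_d) (A : 'I_m -> 'M[K]_d) (p : qpath n m) :=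
  eval_from A (E p.1) p.2.

Definition kills (E : 'I_n -> 'M[K]_d) (A : 'I_m -> 'M[K]_d) (f : qpath n m -> K) :=
  forall sp : seq (qpath n m), uniq sp -> (forall x, f x != 0 -> x \in sp) ->
    \sum_(x <- sp) f x *: evalp E A x = 0.

Definition modpt (I : (qpath n m -> K) -> Prop)
    (E : 'I_n -> 'M[K]_d) (A : 'I_m -> 'M[K]_d) : Prop :=
  [/\ forall i j, E i *m E j = (if i == j then E i else 0),
      \sum_(i < n) E i = 1%:M,
      forall a, A a = E (t a) *m A a *m E (s a) &
      forall f, I f -> kills E A f].

Definition conj_pt (g : 'M[K]_d) (E : 'I_n -> 'M[K]_d) (A : 'I_m -> 'M[K]_d)
   (E' : 'I_n -> 'M[K]_d) (A' : 'I_m -> 'M[K]_d) : Prop :=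
  g \in unitmx /\
  (forall i, E' i = g *m E i *m invmx g) /\ (forall a, A' a = g *m A a *m invmx g).

Definition iso_pt E A E' A' : Prop := exists g, conj_pt g E A E' A'.

(* submodules of the module K^d given by (E, A): subspaces of column
   vectors stable under the action of every path (paths span Lambda). *)
Definition submodule (E : 'I_n -> 'M[K]_d) (A : 'I_m -> 'M[K]_d)
    (S : 'cV[K]_d -> Prop) : Prop :=
  [/\ S 0, forall v w, S v -> S w -> S (v + w),
      forall c v, S v -> S (c *: v) &
      forall p v, S v -> S (evalp E A p *m v)].

Definition uniserial E A : Prop :=
  forall S1 S2, submodule E A S1 -> submodule E A S2 ->
    (forall v, S1 v -> S2 v) \/ (forall v, S2 v -> S1 v).

(* Zariski topology on the ambient affine space of tuples (E, A),     *)
(* with coordinates the matrix entries.                                *)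
Definition coordT := (('I_n + 'I_m) * 'I_d * 'I_d)%type.

Definition coords (E : 'I_n -> 'M[K]_d) (A : 'I_m -> 'M[K]_d)
    : 'I_#|{: coordT}| -> K :=
  fun k => match enum_val k with
           | ((inl i, r), c) => E i r c
           | ((inr a, r), c) => A a r c
           end.

Definition in_zclosure (O : ('I_n -> 'M[K]_d) -> ('I_m -> 'M[K]_d) -> Prop)
    E' A' : Prop :=
  forall P : {mpoly K[#|{: coordT}|]},
    (forall E A, O E A -> P.@[coords E A] = 0) -> P.@[coords E' A'] = 0.

Definition orbit E A : ('I_n -> 'M[K]_d) -> ('I_m -> 'M[K]_d) -> Prop :=
  fun E' A' => iso_pt E A E' A'.

Definition degenerates E A E' A' : Prop :=
  exists E'' A'', iso_pt E' A' E'' A'' /\ in_zclosure (orbit E A) E'' A''.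

End Quiver.

(* Main.v *)
Require Import Defs.
From HB Require Import structures.
From mathcomp Require Import all_boot all_algebra.
From mathcomp Require Import mpoly.
From mathcomp Require Import fingroup perm.
From mathcomp Require Import zify.
Set Implicit Arguments. Unset Strict Implicit. Unset Printing Implicit Defensive.
Import GRing.Theory.
Local Open Scope ring_scope.

Section Poly.
Variables (K : fieldType) (n m d : nat).
Local Notation pt := (('I_n -> 'M[K]_d) -> ('I_m -> 'M[K]_d) -> Prop).
Local Notation NN := #|{: coordT n m d}|.

Definition polS (f : ('I_n -> 'M[K]_d) -> ('I_m -> 'M[K]_d) -> K) :=
  exists P : {mpoly K[NN]}, forall E A, P.@[coords E A] = f E A.

Lemma polS_const c : polS (fun _ _ => c).
Proof. by exists c%:MP => E A; rewrite mevalC. Qed.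

Lemma polS_E i r c : polS (fun E A => E i r c).
Proof.
exists 'X_(enum_rank ((inl i, r), c)) => E A.
by rewrite mevalXU /coords enum_rankK.
Qed.

Lemma polS_A a r c : polS (fun E A => A a r c).
Proof.
exists 'X_(enum_rank ((inr a, r), c)) => E A.
by rewrite mevalXU /coords enum_rankK.
Qed.

Lemma polS_add f g : polS f -> polS g -> polS (fun E A => f E A + g E A).
Proof. by move=> [P HP] [Q HQ]; exists (P + Q) => E A; rewrite mevalD HP HQ. Qed.

Lemma polS_mul f g : polS f -> polS g -> polS (fun E A => f E A * g E A).
Proof. by move=> [P HP] [Q HQ]; exists (P * Q) => E A; rewrite mevalM HP HQ. Qed.

Lemma polS_opp f : polS f -> polS (fun E A => - f E A).
Proof. by move=> [P HP]; exists (- P) => E A; rewrite mevalN HP. Qed.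

Lemma polS_sum (I : Type) (r : seq I) (F : I -> _) :
  (forall i, polS (F i)) -> polS (fun E A => \sum_(i <- r) F i E A).
Proof.
move=> HF; elim: r => [|x r IH].
  by case: (polS_const 0) => P HP; exists P => E A; rewrite HP big_nil.
have := polS_add (HF x) IH; case=> P HP; exists P => E A; by rewrite HP big_cons.
Qed.

Lemma polS_prod (I : Type) (r : seq I) (F : I -> _) :
  (forall i, polS (F i)) -> polS (fun E A => \prod_(i <- r) F i E A).
Proof.
move=> HF; elim: r => [|x r IH].
  by case: (polS_const 1) => P HP; exists P => E A; rewrite HP big_nil.
have := polS_mul (HF x) IH; case=> P HP; exists P => E A; by rewrite HP big_cons.
Qed.

Definition polM p q (F : ('I_n -> 'M[K]_d) -> ('I_m -> 'M[K]_d) -> 'M[K]_(p,q)) :=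
  forall i j, polS (fun E A => F E A i j).

Lemma polS_det p (F : ('I_n -> 'M[K]_d) -> ('I_m -> 'M[K]_d) -> 'M[K]_p) :
  polM F -> polS (fun E A => \det (F E A)).
Proof.
move=> HF; have [] := @polS_sum _ (index_enum {perm 'I_p})
   (fun s E A => (-1) ^+ s * \prod_i F E A i (s i)).
  move=> s; apply: polS_mul; first exact: polS_const.
  have [P HP] := @polS_prod _ (index_enum 'I_p) (fun i E A => F E A i (s i)) (fun i => HF i (s i)).
  by exists P => E A; rewrite HP.
move=> P HP; by exists P => E A; rewrite HP /determinant.
Qed.

Lemma semicont p q (F : ('I_n -> 'M[K]_d) -> ('I_m -> 'M[K]_d) -> 'M[K]_(p,q))
   (O : pt) r E' A' :
  polM F -> (forall E A, O E A -> (\rank (F E A) <= r)%N) ->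
  in_zclosure O E' A' -> (\rank (F E' A') <= r)%N.
Proof.
move=> HF HO Hcl; rewrite leqNgt; apply/negP => Hlt.
set rk := \rank (F E' A').
pose f := maxrankfun (F E' A').
have rfB : row_full (rowsub f (F E' A'))^T.
  by rewrite /row_full mxrank_tr; apply/eqP; apply/eqP; exact: maxrowsub_free.
pose g := fullrankfun rfB.
pose G E A := rowsub g (rowsub f (F E A))^T.
have [P HP] : polS (fun E A => \det (G E A)).
  apply: polS_det => i j; have [P HP] := HF (f j) (g i).
  by exists P => E A; rewrite HP /G !mxE.
have := Hcl P; rewrite HP.
have Hz : forall E A, O E A -> P.@[coords E A] = 0.
  move=> E A HOE; rewrite HP; apply/eqP; apply: contraTT Hlt => Hdet.
  rewrite -leqNgt; apply: leq_trans (HO E A HOE).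
  have : G E A \in unitmx by rewrite unitmxE unitfE.
  move/mxrank_unit => <-; rewrite /G.
  apply: leq_trans (mxrankS (rowsub_sub _ _)) _; rewrite mxrank_tr.
  exact: (mxrankS (rowsub_sub _ _)).
move/(_ Hz)/eqP; apply/negP; rewrite -unitfE -unitmxE; exact: fullrowsub_unit.
Qed.
End Poly.

Section Basic.
Variables (K : fieldType) (n m d : nat).

Lemma eval_fromE (A : 'I_m -> 'M[K]_d) M r :
  eval_from A M r = eval_from A 1%:M r *m M.
Proof.
elim: r M => [|a r IH] M /=; first by rewrite mul1mx.
by rewrite IH (IH (A a *m 1%:M)) mulmx1 mulmxA.
Qed.

Lemma eval_from_rcons (A : 'I_m -> 'M[K]_d) M r a :
  eval_from A M (rcons r a) = A a *m eval_from A M r.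
Proof. by elim: r M => [|b r IH] M //=. Qed.

Lemma evalp_intertw (Ms Ns : 'I_n -> 'M[K]_d) (As Bs : 'I_m -> 'M[K]_d) (X : 'M[K]_d) :
  (forall i, Ms i *m X = X *m Ns i) -> (forall a, As a *m X = X *m Bs a) ->
  forall p, evalp Ms As p *m X = X *m evalp Ns Bs p.
Proof.
move=> HM HA [i r]; rewrite /evalp /=.
have HM' := HM i; move: (Ms i) (Ns i) HM' => M N.
elim: r M N => [|a r IH] M N //= HMN.
by apply: IH; rewrite -mulmxA HMN !mulmxA HA.
Qed.
End Basic.

Section ModFacts.
Variables (K : fieldType) (n m : nat) (s t : 'I_m -> 'I_n).
Variables (I : (qpath n m -> K) -> Prop) (HI : admissible s t I) (d : nat).
Variables (E : 'I_n -> 'M[K]_d) (A : 'I_m -> 'M[K]_d) (HU : modpt s t I E A).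

Lemma AE a i : A a *m E i = if s a == i then A a else 0.
Proof.
case: HU => HE _ HA _.
rewrite (HA a) -!mulmxA HE; by case: (s a == i); rewrite ?mulmx0.
Qed.

Lemma evalp_invalid i r : ~~ valid_from s t i r -> evalp E A (i, r) = 0.
Proof.
rewrite /evalp /=; elim: r i => [|a r IH] i //=.
rewrite eval_fromE AE; case: (s a =P i) => [Hsa|Hsa] /= Hv; last by rewrite mulmx0.
case: HU => _ _ HA _.
by rewrite (HA a) !mulmxA -eval_fromE IH ?mul0mx //.
Qed.

Lemma nilp : exists L, forall r, (L <= size r)%N -> eval_from A 1%:M r = 0.
Proof.
case: HI => _ [L [_ HL _]]; exists L => r Hr.
case: HU => _ Hsum _ Hk.
have -> : eval_from A 1%:M r = eval_from A 1%:M r *m \sum_i E i by rewrite Hsum mulmx1.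
rewrite mulmx_sumr big1 // => i _.
rewrite -eval_fromE -/(evalp E A (i, r)).
case Hv: (valid_from s t i r); last by rewrite evalp_invalid ?Hv.
have := Hk _ (HL (i, r) Hv Hr) [:: (i, r)] erefl.
rewrite big_seq1 /pind eqxx scale1r; apply => x.
by rewrite inE; case: (x == (i, r)); rewrite ?eqxx.
Qed.

Definition genm (g : 'I_n + 'I_m) := match g with inl i => E i | inr a => A a end.

Lemma flag_step (W : 'M[K]_d) : (\rank W < d)%N ->
  exists v : 'rV[K]_d, ~~ (v <= W)%MS /\ forall g, (v *m (genm g)^T <= W + v)%MS.
Proof.
move=> HW; have [L HL] := nilp.
pose rprod (r : seq 'I_m) := (eval_from A 1%:M r)^T.
pose good k := [exists r : k.-tuple 'I_m, ~~ (rprod r <= W)%MS].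
have g0 : good 0%N.
  apply/existsP; exists [tuple]; rewrite /rprod /= trmx1.
  apply: contraL HW => /mxrankS; rewrite mxrank1 -leqNgt; apply.
have gL : forall k, good k -> (k <= L)%N.
  move=> k /existsP [r Hr]; rewrite leqNgt; apply/negP => Hk.
  move: Hr; rewrite /rprod (HL r); first by rewrite trmx0 sub0mx.
  by rewrite size_tuple ltnW.
case: (ex_maxnP (ex_intro _ 0%N g0) gL) => k gk Hmax.
have ngk : ~~ good k.+1 by apply/negP => /Hmax; rewrite ltnn.
case/existsP: gk => r; case/row_subPn => l Hl.
set u := row l (rprod r) in Hl.
have Hua : forall a, (u *m (A a)^T <= W)%MS.
  move=> a; move/existsPn: ngk => /(_ (rcons_tuple r a)); rewrite negbK => Hs.
  apply: submx_trans Hs; rewrite /u -row_mul /rprod /= eval_from_rcons trmx_mul.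
  exact: row_sub.
have [i0 Hi0] : exists i0, ~~ (u *m (E i0)^T <= W)%MS.
  apply/existsP; apply: contraR Hl; rewrite negb_exists => /forallP Hall.
  case: HU => _ Hsum _ _.
  rewrite -[u]mulmx1 -trmx1 -Hsum raddf_sum mulmx_sumr summx_sub // => i _.
  by have := Hall i; rewrite negbK.
exists (u *m (E i0)^T); split => // -[j|a] /=.
  rewrite -mulmxA -trmx_mul; case: HU => HE _ _ _; rewrite HE.
  case: (j =P i0) => [->|_]; last by rewrite trmx0 mulmx0 sub0mx.
  exact: addsmxSr.
rewrite -mulmxA -trmx_mul AE; case: (s a == i0).
  exact: submx_trans (Hua a) (addsmxSl _ _).
by rewrite trmx0 mulmx0 sub0mx.
Qed.

Local Notation pid := (@pid_mx K d d).

Lemma row_pid_mul k (X : 'M[K]_d) (r : 'I_d) :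
  row r (pid_mx k *m X) = if (r < k)%N then row r X else 0.
Proof.
apply/rowP => c; rewrite !mxE (bigD1 r) //= big1 => [|l /negPf Hl].
  by rewrite !mxE eqxx /=; case: (r < k)%N; rewrite ?mul1r ?mul0r addr0 ?mxE.
by rewrite mxE (_ : (r == l :> nat) = false) ?mul0r // eq_sym; exact: Hl.
Qed.

Lemma pid_mul_eq k (X Y : 'M[K]_d) :
  (forall r : 'I_d, (r < k)%N -> row r X = row r Y) -> (pid_mx k : 'M_d) *m X = pid_mx k *m Y.
Proof.
move=> H; apply/row_matrixP => r; rewrite !row_pid_mul.
by case: ifP => // /H.
Qed.

Lemma flag_ind k : (k <= d)%N -> exists H : 'M[K]_d,
  (forall (r : 'I_d) g, (r < k)%N -> (row r H *m (genm g)^T <= pid r.+1 *m H)%MS)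
  /\ \rank (pid k *m H) = k.
Proof.
elim: k => [|k IH] Hk.
  by exists 0; split => // ; rewrite pid_mx_0 mul0mx mxrank0.
have [H [HH Hr]] := IH (ltnW Hk).
have Hrkd : (\rank (pid k *m H) < d)%N by rewrite Hr.
have [v [Hv Hvg]] := flag_step Hrkd.
pose H' := \matrix_(i, j) (if (i : nat) == k then v 0 j else H i j).
have rowH' : forall i : 'I_d, row i H' = if (i : nat) == k then v else row i H.
  by move=> i; apply/rowP => j; rewrite !mxE; case: eqP => // _; rewrite mxE.
have Hagree : forall j, (j <= k)%N -> pid j *m H' = pid j *m H.
  move=> j Hj; apply: pid_mul_eq => r Hrj; rewrite rowH'.
  by case: eqP => // Hrk; move: Hrj; rewrite Hrk ltnNge Hj.
have HW : (pid k *m H <= pid k.+1 *m H')%MS.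
  rewrite -(Hagree k (leqnn k)).
  have -> : pid k = pid k *m pid k.+1 :> 'M[K]_d.
    by rewrite mul_pid_mx (minn_idPl (leqnSn k)) pid_mx_minv.
  by rewrite -mulmxA submxMl.
have Hvs : (v <= pid k.+1 *m H')%MS.
  have Hkd : (k < d)%N by [].
  have := row_sub (Ordinal Hkd) (pid k.+1 *m H').
  by rewrite row_pid_mul /= ltnSn rowH' /= eqxx.
exists H'; split.
  move=> r g; rewrite ltnS leq_eqVlt => /orP [/eqP Hrk|Hrk].
    rewrite rowH' Hrk eqxx; apply: submx_trans (Hvg g) _.
    by rewrite addsmx_sub HW Hvs.
  rewrite rowH' (ltn_eqF Hrk) Hagree //.
  by apply: HH.
apply/eqP; rewrite eqn_leq; apply/andP; split.
  apply: leq_trans (mxrankM_maxl _ _) _; rewrite rank_pid_mx //.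
have Hlt : (\rank (pid k *m H) < \rank (pid k *m H + v)%MS)%N.
  rewrite ltn_neqAle mxrankS ?addsmxSl // andbT.
  apply: contra Hv => /eqP Heq.
  have := mxrank_leqif_sup (addsmxSl (pid k *m H) v).
  by move=> [_]; rewrite Heq eqxx => /esym; rewrite addsmx_sub => /andP [].
rewrite -{1}Hr; apply: leq_trans Hlt _; apply: leq_trans (mxrankS _) (leqnn _).
by rewrite addsmx_sub HW Hvs.
Qed.

Lemma flagQ : exists Q : nat -> 'M[K]_d,
  [/\ Q 0%N = 0, Q d = 1%:M, forall j, Q j *m Q j = Q j,
      forall j, (j <= d)%N -> \rank (Q j) = j &
      forall j g, genm g *m Q j = Q j *m genm g *m Q j].
Proof.
have [H [HH Hr]] := flag_ind (leqnn d).
rewrite pid_mx_1 mul1mx in Hr.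
have Hu : H \in unitmx by rewrite -row_free_unit /row_free Hr.
have Hpp : forall j, pid j *m pid j = pid j.
  by move=> j; rewrite mul_pid_mx minnn pid_mx_minv.
have Hst : forall j g, (pid j *m H *m (genm g)^T <= pid j *m H)%MS.
  move=> j g; apply/row_subP => r; rewrite row_mul row_pid_mul.
  case: ifP => Hrj; last by rewrite mul0mx sub0mx.
  apply: submx_trans (HH r g (ltn_ord r)) _.
  have -> : pid r.+1 = pid r.+1 *m pid j.
    by rewrite mul_pid_mx (minn_idPl Hrj) pid_mx_minv.
  by rewrite -mulmxA submxMl.
pose P j := invmx H *m pid j *m H.
exists (fun j => (P j)^T); split.
- by rewrite /P pid_mx_0 mulmx0 mul0mx trmx0.
- by rewrite /P pid_mx_1 mulmx1 mulVmx // trmx1.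
- move=> j; rewrite -trmx_mul /P; congr (_^T).
  rewrite !mulmxA -[invmx H *m pid j *m H *m invmx H]mulmxA mulmxV // mulmx1.
  by rewrite -!mulmxA (mulmxA (pid j) (pid j)) Hpp.
- move=> j Hj; rewrite mxrank_tr /P mxrankMfree; last by rewrite row_free_unit.
  have Hf : row_full (invmx H) by rewrite row_full_unit unitmx_inv.
  by rewrite (eqmxMfull _ Hf) rank_pid_mx.
- move=> j g; apply: trmx_inj; rewrite !trmx_mul !trmxK.
  have [C HC] := submxP (Hst j g).
  set X := pid j *m H; set N := (genm g)^T.
  have HX : X *m (invmx H *m X) = X.
    by rewrite /X !mulmxA -(mulmxA (pid j) H (invmx H)) mulmxV // mulmx1 Hpp.
  have -> : invmx H *m pid j *m H = invmx H *m X by rewrite mulmxA.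
  have E1 : invmx H *m X *m N = invmx H *m (C *m X) by rewrite -mulmxA HC.
  by rewrite [RHS]mulmxA E1 -[RHS]mulmxA -(mulmxA C X) HX.
Qed.
End ModFacts.


Section T. Variables (K : fieldType) (m1 n1 m2 n2 : nat).
Lemma mul_vec_linP (f : 'M[K]_(m1,n1) -> 'M[K]_(m2,n2)) : linear f ->
  forall X, mxvec X *m lin_mx f = mxvec (f X).
Proof.
move=> fL X.
pose F : {linear 'M[K]_(m1,n1) -> 'M[K]_(m2,n2)} := HB.pack f (GRing.isLinear.Build _ _ _ _ f fL).
exact: (mul_vec_lin F).
Qed.
End T.

Section Hom.
Variables (K : fieldType) (n m d : nat).
Variables (E : 'I_n -> 'M[K]_d) (A : 'I_m -> 'M[K]_d) (Q : 'M[K]_d).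
Local Notation GT := (option ('I_n + 'I_m)).

Definition homF (E2 : 'I_n -> 'M[K]_d) (A2 : 'I_m -> 'M[K]_d) (psi : 'M[K]_d)
   : 'M[K]_(#|{: GT}|, d * d) :=
  \matrix_(k, l) mxvec (match enum_val k with
                        | None => psi *m (1%:M - Q)
                        | Some g => genm E2 A2 g *m psi - psi *m (genm E A g *m Q)
                        end) 0 l.

Lemma homF_lin E2 A2 : linear (homF E2 A2).
Proof.
move=> c x y; apply/matrixP => k l; rewrite !mxE.
case: (enum_val k) => [g|]; rewrite ?linearP ?mxE //.
  by rewrite mulmxDl -scalemxAl opprD addrACA -scalerBr linearP !mxE.
by rewrite mulmxDl -scalemxAl linearP !mxE.
Qed.

Definition HomM E2 A2 := lin_mx (homF E2 A2).

Definition homC E2 A2 (psi : 'M[K]_d) :=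
  psi *m (1%:M - Q) = 0 /\ forall g, genm E2 A2 g *m psi = psi *m (genm E A g *m Q).

Lemma homF0 E2 A2 psi : homF E2 A2 psi = 0 <-> homC E2 A2 psi.
Proof.
split.
- move=> H0; split.
    apply/eqP; rewrite -mxvec_eq0; apply/eqP/rowP => l.
    move/matrixP: (H0) => /(_ (enum_rank (None : GT)) l); rewrite !mxE enum_rankK.
    by [].
  move=> g; apply/eqP; rewrite -subr_eq0 -mxvec_eq0; apply/eqP/rowP => l.
  move/matrixP: (H0) => /(_ (enum_rank (Some g : GT)) l); rewrite !mxE enum_rankK.
  by [].
- move=> [H1 H2]; apply/matrixP => k l; rewrite !mxE.
  case: (enum_val k) => [g|]; first by rewrite H2 subrr linear0 mxE.
  by rewrite H1 linear0 mxE.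
Qed.

Lemma in_hom E2 A2 psi :
  (mxvec psi <= kermx (HomM E2 A2))%MS <-> homC E2 A2 psi.
Proof.
rewrite sub_kermx /HomM mul_vec_linP ?mxvec_eq0; last exact: homF_lin.
by rewrite -homF0; split => /eqP.
Qed.

Lemma polS_ext (f g : ('I_n -> 'M[K]_d) -> ('I_m -> 'M[K]_d) -> K) :
  (forall E2 A2, f E2 A2 = g E2 A2) -> polS f -> polS g.
Proof. by move=> H [P HP]; exists P => E2 A2; rewrite HP H. Qed.

Lemma polS_mxvec p q (F : ('I_n -> 'M[K]_d) -> ('I_m -> 'M[K]_d) -> 'M[K]_(p, q)) :
  (forall r c, polS (fun E2 A2 => F E2 A2 r c)) ->
  forall j, polS (fun E2 A2 => mxvec (F E2 A2) 0 j).
Proof.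
move=> HF j; case/mxvec_indexP: j => r c.
by apply: polS_ext (HF r c) => E2 A2; rewrite mxvecE.
Qed.

Lemma polS_genm g r c : polS (fun (E2 : 'I_n -> 'M[K]_d) (A2 : 'I_m -> 'M[K]_d) => genm E2 A2 g r c).
Proof. case: g => [i|a]; [exact: polS_E | exact: polS_A]. Qed.

Lemma polM_HomM : polM (fun E2 A2 => HomM E2 A2).
Proof.
move=> i j.
set psi0 := vec_mx (delta_mx 0 i) : 'M[K]_d.
apply: (@polS_ext (fun E2 A2 => mxvec (homF E2 A2 psi0) 0 j)).
  by move=> E2 A2; rewrite /HomM /lin_mx /lin1_mx mxE.
apply: polS_mxvec => k l.
apply: (@polS_ext (fun E2 A2 => mxvec (match enum_val k with
                        | None => psi0 *m (1%:M - Q)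
                        | Some g => genm E2 A2 g *m psi0 - psi0 *m (genm E A g *m Q)
                        end) 0 l)).
  by move=> E2 A2; rewrite mxE.
apply: polS_mxvec => r c.
case: (enum_val k) => [g|]; last exact: polS_const.
apply: (@polS_ext (fun E2 A2 => \sum_(l0 <- index_enum 'I_d) genm E2 A2 g r l0 * psi0 l0 c
                                + - (psi0 *m (genm E A g *m Q)) r c)).
  by move=> E2 A2; rewrite !mxE.
apply: polS_add; last exact: polS_const.
apply: polS_sum => l0; apply: polS_mul; [exact: polS_genm | exact: polS_const].
Qed.

Lemma rows_eq p q (X Y : 'M[K]_(p,q)) : (forall u : 'rV_p, u *m X = u *m Y) -> X = Y.
Proof. by move=> H; apply/row_matrixP => i; rewrite !rowE H. Qed.

Lemma genm_conj (g0 : 'M[K]_d) (E1 E2 : 'I_n -> 'M[K]_d) (A1 A2 : 'I_m -> 'M[K]_d) : conj_pt g0 E1 A1 E2 A2 ->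
  forall h, genm E2 A2 h = g0 *m genm E1 A1 h *m invmx g0.
Proof. by case=> _ [HE HA] [i|a] /=. Qed.

Lemma conj_rank (g0 : 'M[K]_d) (E1 E2 : 'I_n -> 'M[K]_d) (A1 A2 : 'I_m -> 'M[K]_d) : conj_pt g0 E1 A1 E2 A2 ->
  (\rank (HomM E2 A2) <= \rank (HomM E1 A1))%N.
Proof.
move=> Hc; have Hg : g0 \in unitmx by case: Hc.
pose T := lin_mx (@mulmx K d d d g0); pose T' := lin_mx (@mulmx K d d d (invmx g0)).
have HTT : T *m T' = 1%:M.
  apply: rows_eq => u; rewrite mulmx1 mulmxA -[u]vec_mxK !mul_vec_lin /=.
  by rewrite mulmxA mulVmx // mul1mx.
have Tfree : row_free T by rewrite row_free_unit; case: (mulmx1_unit HTT).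
have Hsub : (kermx (HomM E1 A1) *m T <= kermx (HomM E2 A2))%MS.
  apply/row_subP => i; rewrite row_mul.
  set u := row i (kermx (HomM E1 A1)).
  have : (mxvec (vec_mx u) <= kermx (HomM E1 A1))%MS by rewrite vec_mxK row_sub.
  move/in_hom => [H1 H2]; rewrite -[u]vec_mxK mul_vec_lin /=; apply/in_hom; split.
    by rewrite -mulmxA H1 mulmx0.
  move=> h; rewrite (genm_conj Hc) -!mulmxA (mulmxA (invmx g0)) mulVmx // mul1mx H2.
  by rewrite !mulmxA.
have := mxrankS Hsub; rewrite mxrankMfree // !mxrank_ker.
have := rank_leq_row (HomM E1 A1); have := rank_leq_row (HomM E2 A2); lia.
Qed.
End Hom.


Section Aux.
Variables (K : fieldType) (n m d : nat).

Definition LM (X : 'M[K]_d) := lin_mx (@mulmx K d d d X).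

Lemma LM_vec X psi : mxvec psi *m LM X = mxvec (X *m psi).
Proof. exact: mul_vec_lin. Qed.

Lemma in_LM X psi : (mxvec psi <= kermx (LM X))%MS = (X *m psi == 0).
Proof. by rewrite sub_kermx LM_vec mxvec_eq0. Qed.

Lemma sub_of_hom (E E2 : 'I_n -> 'M[K]_d) (A A2 : 'I_m -> 'M[K]_d) (Q X : 'M[K]_d) :
  homC E A Q E2 A2 X -> submodule E2 A2 (fun v : 'cV[K]_d => (v^T <= X^T)%MS).
Proof.
move=> [_ H2]; split.
- by rewrite trmx0 sub0mx.
- by move=> v w Hv Hw; rewrite linearD /= addmx_sub.
- by move=> c v Hv; rewrite linearZ /= scalemx_sub.
- move=> p v Hv; rewrite trmx_mul.
  have Hint := @evalp_intertw K n m d E2 (fun i => E i *m Q) A2 (fun a => A a *m Q) X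
     (fun i => H2 (inl i)) (fun a => H2 (inr a)) p.
  apply: submx_trans (submxMr _ Hv) _.
  by rewrite -trmx_mul Hint trmx_mul submxMl.
Qed.

Lemma col_incl (X Y : 'M[K]_d) :
  (forall v : 'cV[K]_d, (v^T <= X^T)%MS -> (v^T <= Y^T)%MS) -> (X^T <= Y^T)%MS.
Proof.
move=> H; apply/row_subP => i; rewrite -tr_col; apply: H.
by rewrite tr_col row_sub.
Qed.
End Aux.

Section Main.
Variables (K : fieldType) (n m d : nat).
Variables (E E' : 'I_n -> 'M[K]_d) (A A' : 'I_m -> 'M[K]_d).
Variable (Q : nat -> 'M[K]_d).
Hypotheses (Q0 : Q 0%N = 0) (Qd : Q d = 1%:M) (Qidem : forall j, Q j *m Q j = Q j)
  (Qrank : forall j, (j <= d)%N -> \rank (Q j) = j)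
  (Qstab : forall j g, genm E A g *m Q j = Q j *m genm E A g *m Q j).
Hypothesis Huni' : uniserial E' A'.
Hypothesis Hrk : forall j,
  (\rank (HomM E A (Q j) E' A') <= \rank (HomM E A (Q j) E A))%N.

Lemma step j : (j < d)%N ->
  (exists psi L, homC E A (Q j) E' A' psi /\ L *m psi = Q j) ->
  (exists psi L, homC E A (Q j.+1) E' A' psi /\ L *m psi = Q j.+1).
Proof.
move=> Hjd [psi [L [[Hp1 Hp2] HL]]].
set j' := j.+1.
have psiQ : psi *m Q j = psi.
  by apply/eqP; rewrite -subr_eq0 -oppr_eq0 opprB -{1}(mulmx1 psi) -mulmxBr Hp1.
have psiLpsi : psi *m L *m psi = psi by rewrite -mulmxA HL psiQ.
set R := 1%:M - psi *m L.
set HU_ := kermx (HomM E A (Q j') E A).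
set HX := (HU_ :&: kermx (LM (1%:M - Q j)))%MS.
set H' := kermx (HomM E A (Q j') E' A').
set HY := (H' :&: kermx (LM R))%MS.
set Tm := LM (Q j *m L).
set Sm := LM psi.
have Ha : (\rank HX < \rank HU_)%N.
  have HXU : (HX <= HU_)%MS by exact: capmxSl.
  have HQin : (mxvec (Q j') <= HU_)%MS.
    apply/in_hom; split.
      by rewrite mulmxBr mulmx1 Qidem subrr.
    by move=> g; rewrite {1}Qstab mulmxA.
  rewrite ltn_neqAle mxrankS // andbT.
  apply/negP => /eqP Heq.
  have := mxrank_leqif_sup HXU; rewrite Heq => -[_]; rewrite eqxx => /esym HUX.
  have := submx_trans HQin HUX; rewrite sub_capmx => /andP [_].
  rewrite in_LM mulmxBl mul1mx subr_eq0 => /eqP HQQ.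
  have := mxrankM_maxl (Q j) (Q j'); rewrite -HQQ !Qrank ?ltnn //; exact: ltnW.
have HYmem : forall u, (u <= HY)%MS ->
    homC E A (Q j') E' A' (vec_mx u) /\ R *m vec_mx u = 0.
  move=> u; rewrite sub_capmx -{1 2}[u]vec_mxK in_LM => /andP [Hu1 /eqP Hu2].
  by split => //; apply/in_hom.
have Hb1 : (HY *m Tm <= HX)%MS.
  apply/row_subP => i; rewrite row_mul.
  have [[Hc1 Hc2] HRc] := HYmem _ (row_sub i HY).
  set c := vec_mx (row i HY) in Hc1 Hc2 HRc *.
  rewrite -[row i HY]vec_mxK -/c /Tm LM_vec.
  have psiLc : psi *m L *m c = c.
    by apply/eqP; rewrite -subr_eq0 -oppr_eq0 opprB -{1}(mul1mx c) -mulmxBl HRc.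
  rewrite sub_capmx in_LM.
  have -> : (1%:M - Q j) *m (Q j *m L *m c) = 0 by rewrite !mulmxA mulmxBl mul1mx Qidem subrr !mul0mx.
  rewrite eqxx andbT.
  apply/in_hom; split.
    by rewrite -!mulmxA Hc1 !mulmx0.
  move=> g; set T := Q j *m L *m c.
  set X := genm E A g *m T - T *m (genm E A g *m Q j').
  have HX1 : psi *m X = 0.
    rewrite /X /T mulmxBr !mulmxA -(mulmxA psi (genm E A g)) -Hp2.
    have psiLc0 : psi *m (L *m c) = c by rewrite mulmxA psiLc.
    have psiLc' : forall Y : 'M[K]_d, psi *m (L *m (c *m Y)) = c *m Y.
      by move=> Y; rewrite !mulmxA psiLc.
    by rewrite psiQ -!mulmxA psiLc' psiLc0 Hc2 subrr.
  have HX2 : Q j *m X = X.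
    rewrite /X /T mulmxBr !mulmxA Qidem.
    by rewrite -Qstab.
  apply/eqP; rewrite -subr_eq0; apply/eqP; rewrite -/X.
  by rewrite -HX2 -HL -mulmxA HX1 mulmx0.
have Hb2 : HY *m Tm *m Sm = HY.
  apply/row_matrixP => i; rewrite !row_mul.
  have [_ HRc] := HYmem _ (row_sub i HY).
  rewrite -[row i HY]vec_mxK /Tm /Sm !LM_vec; congr mxvec.
  rewrite !mulmxA psiQ.
  by apply/eqP; rewrite -subr_eq0 -oppr_eq0 opprB -{1}(mul1mx (vec_mx _)) -mulmxBl HRc.
have Hb : (\rank HY <= \rank HX)%N.
  rewrite -{1}Hb2; apply: leq_trans (mxrankM_maxl _ _) _.
  exact: mxrankS.
have Hc : (\rank HU_ <= \rank H')%N.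
  rewrite /HU_ /H' !mxrank_ker.
  have := Hrk j'; have := rank_leq_row (HomM E A (Q j') E A);
  have := rank_leq_row (HomM E A (Q j') E' A'); lia.
have : ~~ (H' <= kermx (LM R))%MS.
  apply/negP => HH; have : (H' <= HY)%MS by rewrite sub_capmx submx_refl HH.
  move/mxrankS; rewrite leqNgt; apply/negP.
  by rewrite negbK; exact: leq_ltn_trans Hb (leq_trans Ha Hc).
case/row_subPn => i Hi.
have Hchi : homC E A (Q j') E' A' (vec_mx (row i H')).
  by apply/in_hom; rewrite vec_mxK row_sub.
set chi := vec_mx (row i H') in Hchi.
have HRchi : R *m chi != 0 by rewrite -in_LM /chi vec_mxK.
have Hnot : ~~ (chi^T <= psi^T)%MS.
  apply/negP => /submxP [D HD].
  move: HRchi; rewrite -[chi]trmxK HD trmx_mul trmxK /R mulmxBl mul1mx mulmxA.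
  by rewrite psiLpsi subrr eqxx.
have Hsub : (psi^T <= chi^T)%MS.
  case: (Huni' (sub_of_hom Hchi) (sub_of_hom (conj Hp1 Hp2))) => Hinc.
    by move: Hnot; rewrite col_incl.
  exact: col_incl.
have Hrk1 : (j < \rank chi)%N.
  have [Hle Heq] := mxrank_leqif_sup Hsub; rewrite (negbTE Hnot) in Heq.
  have Hj : (j <= \rank psi)%N by rewrite -(Qrank (ltnW Hjd)) -HL mxrankM_maxr.
  rewrite -mxrank_tr; apply: leq_ltn_trans Hj _.
  by rewrite -(mxrank_tr psi) ltn_neqAle Heq Hle.
have Hchi1 : chi *m Q j' = chi.
  case: Hchi => Hc1 _.
  by apply/eqP; rewrite -subr_eq0 -oppr_eq0 opprB -{1}(mulmx1 chi) -mulmxBr Hc1.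
have HchiQ : (chi <= Q j')%MS by rewrite -Hchi1 submxMl.
have Hrq : \rank chi = \rank (Q j').
  apply/eqP; rewrite eqn_leq mxrankS //= Qrank //.
have [_] := mxrank_leqif_sup HchiQ; rewrite Hrq eqxx => /esym /submxP [L' HL'].
by exists chi, L'; split.
Qed.

Lemma main_iso : iso_pt E A E' A'.
Proof.
have Hall : forall j, (j <= d)%N -> exists psi L, homC E A (Q j) E' A' psi /\ L *m psi = Q j.
  elim=> [_|j IH Hj].
    exists 0, 0; split; last by rewrite mulmx0 Q0.
    by split; [rewrite mul0mx | move=> g; rewrite mulmx0 mul0mx].
  by apply: step => //; apply: IH; exact: ltnW.
have [psi [L [[_ H2] HL]]] := Hall d (leqnn d).
rewrite Qd in HL H2.
have [_ Hu] := mulmx1_unit HL.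
exists psi; split => //; split => [i|a].
  by have := H2 (inl i); rewrite /= mulmx1 => Hg; rewrite -Hg -mulmxA mulmxV // mulmx1.
by have := H2 (inr a); rewrite /= mulmx1 => Hg; rewrite -Hg -mulmxA mulmxV // mulmx1.
Qed.
End Main.

Lemma conj_inv (K : fieldType) n m d (g : 'M[K]_d) (E1 E2 : 'I_n -> 'M[K]_d) (A1 A2 : 'I_m -> 'M[K]_d) :
  conj_pt g E1 A1 E2 A2 -> conj_pt (invmx g) E2 A2 E1 A1.
Proof.
move=> [Hu [HE HA]]; split; first by rewrite unitmx_inv.
split => [i|a]; by rewrite ?HE ?HA invmxK !mulmxA mulVmx // mul1mx -mulmxA mulVmx // mulmx1.
Qed.

Theorem propositionE (K : closedFieldType) (n m : nat) (s t : 'I_m -> 'I_n)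
    (I : (qpath n m -> K) -> Prop) (HI : admissible s t I) (d : nat)
    (E E' : 'I_n -> 'M[K]_d) (A A' : 'I_m -> 'M[K]_d)
    (HU : modpt s t I E A) (HU' : modpt s t I E' A')
    (Huni : uniserial E A) (Huni' : uniserial E' A')
    (Hniso : ~ iso_pt E A E' A') :
  ~ degenerates E A E' A'.
Proof.
move=> [E'' [A'' [Hiso Hcl]]].
have [Q [Q0 Qd Qid Qrk Qst]] := flagQ HI HU.
apply: Hniso; apply: (main_iso Q0 Qd Qid Qrk Qst Huni') => j.
have H1 : (\rank (HomM E A (Q j) E'' A'') <= \rank (HomM E A (Q j) E A))%N.
  apply: (semicont (polM_HomM E A (Q j)) _ Hcl) => E1 A1 [g Hg].
  exact: conj_rank Hg.
case: Hiso => g Hg.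
exact: leq_trans (conj_rank _ _ _ (conj_inv Hg)) H1.
Qed.
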